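(* Let $(G,\varepsilon_G)$ be a graded Lie group with $\mathcal G(G)\neq\emptyset$, $Z\subseteq Z(G^\uparrow)$ a closed subgroup which is normal in $G$, $q\colon G\to\underline G=G/Z$ the quotient map and notation as in the context. Fix $W=(x,\sigma)\in\mathcal G(G)$, $\underline W=(x,q(\sigma))$ and $\mathcal W_+=G^\uparrow.W$. Then for each $\alpha\in Z^-$: (a) for every $W_1=(x_1,\sigma_1)\in\mathcal G(G)$, $q_{\mathcal G}(W_1^{'\alpha})=(-x_1,q(\sigma_1))$; (b) if $\alpha^2\neq e$, the map $W_1\mapsto W_1^{'\alpha}$ is not involutive; (c) the map $\mathcal G(G)\to\mathcal G(G)$, $(x_1,\sigma_1)\mapsto(-x_1,\alpha\sigma_1)$ is $G^\uparrow$-equivariant; (d) $W_1^{'\alpha}=\alpha*W_1'$ for $W_1\in\mathcal G(G)$; (e) $*_\alpha$ defines an action of $G$ on $\mathcal G(G)$ satisfying $W_1^{'\alpha}=\sigma_1*_\alpha W_1$ for $W_1=(x_1,\sigma_1)\in\mathcal G(G)$; if $W^{'\alpha}\in G^\uparrow.W$, then $\mathcal W_+$ is invariant under $G$ for the action $*_\alpha$; (f) there exists $\alpha\in Z^-$ with $W^{'\alpha}\in\mathcal W_+$ if and only if $(-x,q(\sigma))\in q(G^\uparrow).\underline W$; if this holds for $\alpha$, then for $\beta\in Z^-$ one has $W^{'\beta}\in\mathcal W_+$ if and only if $\beta^{-1}\alpha\in Z_2$, and in this case the twisted actions of $g\in G^\downarrow$ are related by $g*_\beta=(\beta\alpha^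{-1})*g*_\alpha$.
   Context: $G$ is a finite-dimensional Lie group with Lie algebra $\mathfrak g$ and continuous homomorphism $\varepsilon_G\colon G\to\{\pm1\}$, $G^\uparrow=\ker\varepsilon_G$, $G^\downarrow=G\setminus G^\uparrow$. For a graded Lie group $H$ (here $G$ or $\underline G$ with grading induced from $G$), $\mathcal G(H)=\{(x,\tau)\in\mathfrak g\times H^\downarrow:\tau^2=e,\operatorname{Ad}_{\mathfrak g}(\tau)x=x\}$ with action $h.(x,\tau)=(\varepsilon(h)\operatorname{Ad}_{\mathfrak g}(h)x,h\tau h^{-1})$ (for $\underline G$, $\operatorname{Ad}_{\mathfrak g}$ is the factorized adjoint action, which exists since $Z$ acts trivially on $\mathfrak g$). $q_{\mathcal G}\colon\mathcal G(G)\to\mathcal G(\underline G)$, $(x,\sigma)\mapsto(x,q(\sigma))$. For $W_1=(x_1,\sigma_1)\in\mathcal G(G)$, $W_1'=(-x_1,\sigma_1)$. $Z^-=\{\gamma\in Z:\sigma\gamma\sigma=\gamma^{-1}\}$ (independent of the choice of $\sigma\in G^\downarrow$). For $\alpha\in Z^-$: $\alpha*(x_1,\sigma_1)=(x_1,\alpha\sigma_1)$ (an action of $Z^-$ on $\mathcal G(G)$); the $\alpha$-twisted complement is $W_1^{'\alpha}=(-x_1,\alpha\sigma_1)$; the twisted action is $g*_\alpha W_1=g.W_1$ for $g\in G^\uparrow$ and $g*_\alpha W_1=g.(\alpha^{-1}*W_1)=\alpha*(g.W_1)$ for $g\in G^\downarrow$. Further $G^\uparrow_{\underline W}=\{g\in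 G^\uparrow:q(g).\underline W=\underline W\}$, $\partial\colon G^\uparrow_{\underline W}\to Z^-$, $\partial(g)=g\sigma g^{-1}\sigma$, and $Z_2=\partial(G^\uparrow_{\underline W})$. *)

(* Defs.v *)
From HB Require Import structures.
From mathcomp Require Import all_boot all_order all_algebra.
From mathcomp Require Import reals.
Set Implicit Arguments. Unset Strict Implicit. Unset Printing Implicit Defensive.
Import Order.TTheory GRing.Theory Num.Theory.
Local Open Scope ring_scope.

(* A graded group (G, eps_G) together with its adjoint action on the Lie
   algebra V.  geps g = true  <->  eps_G(g) = +1, i.e. g \in G^up. *)
Record graded_group (R : realType) (V : lmodType R) := GradedGroup {
  gcar :> Type;
  gmul : gcar -> gcar -> gcar;
  ginv : gcar -> gcar;
  gone : gcar;
  gmulA : forall a b c, gmul a (gmul b c) = gmul (gmul a b) c;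
  gmul1g : forall a, gmul gone a = a;
  gmulVg : forall a, gmul (ginv a) a = gone;
  geps : gcar -> bool;
  geps_mul : forall a b, geps (gmul a b) = (geps a == geps b);
  gAd : gcar -> V -> V;
  gAd_lin : forall g (c : R) u v, gAd g (c *: u + v) = c *: gAd g u + gAd g v;
  gAd_mul : forall a b v, gAd (gmul a b) v = gAd a (gAd b v);
  gAd1 : forall v, gAd gone v = v
}.

Section GradedDefs.
Variables (R : realType) (V : lmodType R) (G : graded_group V).

Definition up (g : G) : Prop := geps g = true.
Definition down (g : G) : Prop := geps g = false.
Definition sgn (g : G) : R := if geps g then 1 else -1.

Definition GS (W : V * G) : Prop :=
  down W.2 /\ gmul W.2 W.2 = gone G /\ gAd W.2 W.1 = W.1.

Definition act (h : G) (W : V * G) : V * G :=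
  (sgn h *: gAd h W.1, gmul (gmul h W.2) (ginv h)).

Definition compl (W : V * G) : V * G := (- W.1, W.2).
Definition zact (a : G) (W : V * G) : V * G := (W.1, gmul a W.2).
Definition tcompl (a : G) (W : V * G) : V * G := (- W.1, gmul a W.2).
Definition tact (a g : G) (W : V * G) : V * G :=
  if geps g then act g W else act g (zact (ginv a) W).

Definition orbit_up (W : V * G) (W1 : V * G) : Prop :=
  exists g, up g /\ W1 = act g W.

Definition Zminus (Z : G -> Prop) (sigma : G) (c : G) : Prop :=
  Z c /\ gmul (gmul sigma c) sigma = ginv c.

End GradedDefs.

Section QuotDefs.
Variables (R : realType) (V : lmodType R) (G Gb : graded_group V) (q : G -> Gb).

Definition qG (W : V * G) : V * Gb := (W.1, q W.2).

Definition qorbit_up (Wb : V * Gb) (Wb1 : V * Gb) : Prop :=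
  exists g : G, up g /\ Wb1 = act (q g) Wb.

Definition Gup_stab (W : V * G) (g : G) : Prop :=
  up g /\ act (q g) (qG W) = qG W.

Definition bd (sigma g : G) : G := gmul (gmul (gmul g sigma) (ginv g)) sigma.

Definition Z2 (W : V * G) (c : G) : Prop :=
  exists g, Gup_stab W g /\ c = bd W.2 g.

End QuotDefs.

(* Main.v *)
Require Import Defs.
From HB Require Import structures.
From mathcomp Require Import all_boot all_order all_algebra.
From mathcomp Require Import reals.
Import Order.TTheory GRing.Theory Num.Theory.
Local Open Scope ring_scope.

Lemma gmulKg {R : realType} {V : lmodType R} {G : graded_group V} (a b : G) :
  gmul (ginv a) (gmul a b) = b.
Proof. by rewrite gmulA gmulVg gmul1g. Qed.

Lemma gidem {R : realType} {V : lmodType R} {G : graded_group V} (e : G) :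
  gmul e e = e -> e = gone G.
Proof. by move=> H; rewrite -(gmulVg e) -{3}H gmulKg. Qed.

Lemma gmulgV {R : realType} {V : lmodType R} {G : graded_group V} (a : G) :
  gmul a (ginv a) = gone G.
Proof. by apply: gidem; rewrite -gmulA gmulKg. Qed.

Lemma gmulg1 {R : realType} {V : lmodType R} {G : graded_group V} (a : G) :
  gmul a (gone G) = a.
Proof. by rewrite -(gmulVg a) gmulA gmulgV gmul1g. Qed.

Lemma gmulVKg {R : realType} {V : lmodType R} {G : graded_group V} (a b : G) :
  gmul a (gmul (ginv a) b) = b.
Proof. by rewrite gmulA gmulgV gmul1g. Qed.

Lemma gmulgK {R : realType} {V : lmodType R} {G : graded_group V} (a b : G) :
  gmul (gmul b a) (ginv a) = b.
Proof. by rewrite -gmulA gmulgV gmulg1. Qed.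

Lemma gmulgKV {R : realType} {V : lmodType R} {G : graded_group V} (a b : G) :
  gmul (gmul b (ginv a)) a = b.
Proof. by rewrite -gmulA gmulVg gmulg1. Qed.

Lemma ginv_uniq {R : realType} {V : lmodType R} {G : graded_group V} (a b : G) :
  gmul a b = gone G -> a = ginv b.
Proof. by move=> H; rewrite -(gmulgK b a) H gmul1g. Qed.

Lemma ginvK {R : realType} {V : lmodType R} {G : graded_group V} (a : G) :
  ginv (ginv a) = a.
Proof. by apply: esym; apply: ginv_uniq; apply: gmulgV. Qed.

Lemma ginvM {R : realType} {V : lmodType R} {G : graded_group V} (a b : G) :
  ginv (gmul a b) = gmul (ginv b) (ginv a).
Proof.
apply: esym; apply: ginv_uniq.
by rewrite -gmulA (gmulA (ginv a)) gmulVg gmul1g gmulVg.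
Qed.

Lemma ginv1 {R : realType} {V : lmodType R} (G : graded_group V) :
  ginv (gone G) = gone G.
Proof. by apply: esym; apply: ginv_uniq; rewrite gmul1g. Qed.

Lemma geps1 {R : realType} {V : lmodType R} (G : graded_group V) :
  geps (gone G) = true.
Proof. by have := geps_mul (gone G) (gone G); rewrite gmul1g eqxx. Qed.

Lemma gepsV {R : realType} {V : lmodType R} {G : graded_group V} (a : G) :
  geps (ginv a) = geps a.
Proof. by have := geps_mul (ginv a) a; rewrite gmulVg geps1 => /esym/eqP. Qed.

Lemma sgnM {R : realType} {V : lmodType R} {G : graded_group V} (a b : G) :
  sgn (gmul a b) = sgn a * sgn b.
Proof.
rewrite /sgn geps_mul; case: (geps a); case: (geps b) => /=;
  by rewrite ?mulr1 ?mulrN1 ?opprK.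
Qed.

Lemma gAd0 {R : realType} {V : lmodType R} {G : graded_group V} (g : G) :
  gAd g 0 = 0.
Proof.
have := gAd_lin g 1 0 0; rewrite !scale1r addr0 => H.
by apply: (addrI (gAd g 0)); rewrite addr0 -H.
Qed.

Lemma gAdZ {R : realType} {V : lmodType R} {G : graded_group V} (g : G) c v :
  gAd g (c *: v) = c *: gAd g v.
Proof. by have := gAd_lin g c v 0; rewrite !addr0 gAd0 addr0. Qed.

Lemma gAdN {R : realType} {V : lmodType R} {G : graded_group V} (g : G) v :
  gAd g (- v) = - gAd g v.
Proof. by rewrite -scaleN1r gAdZ scaleN1r. Qed.

Lemma sgn_up {R : realType} {V : lmodType R} {G : graded_group V} (g : G) :
  up g -> sgn g = 1.
Proof. by rewrite /up /sgn => ->. Qed.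

Lemma sgn_down {R : realType} {V : lmodType R} {G : graded_group V} (g : G) :
  down g -> sgn g = -1.
Proof. by rewrite /down /sgn => ->. Qed.

Lemma actM {R : realType} {V : lmodType R} {G : graded_group V} (g h : G) W :
  act (gmul g h) W = act g (act h W).
Proof.
rewrite /act /=; congr pair.
  by rewrite sgnM gAd_mul gAdZ scalerA mulrC.
by rewrite ginvM -!gmulA.
Qed.

Lemma act1 {R : realType} {V : lmodType R} (G : graded_group V) W :
  act (gone G) W = W.
Proof.
case: W => a b; rewrite /act /= gAd1 /sgn geps1 scale1r gmul1g ginv1 gmulg1 //.
Qed.

Lemma GS_act {R : realType} {V : lmodType R} {G : graded_group V} (g : G) W :
  GS W -> GS (act g W).
Proof.
case: W => x1 s1 [/= Hd [Hs HA]]; split; [|split] => /=.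
- by rewrite /down !geps_mul gepsV Hd; case: (geps g).
- by rewrite -!gmulA gmulKg (gmulA s1) Hs gmul1g gmulgV.
- have E : forall v, gAd (ginv g) (gAd g v) = v.
    by move=> v; rewrite -gAd_mul gmulVg gAd1.
  by rewrite !gAd_mul !gAdZ E HA.
Qed.
Theorem lemma2p18 (R : realType) (V : lmodType R) (G Gb : graded_group V)
  (Z : G -> Prop) (q : G -> Gb)
  (* G(G) is nonempty *)
  (HGne : exists W1 : V * G, GS W1)
  (* Z is a subgroup *)
  (HZ1 : Z (gone G))
  (HZmul : forall a b, Z a -> Z b -> Z (gmul a b))
  (HZinv : forall a, Z a -> Z (ginv a))
  (* Z is contained in the centre of G^up *)
  (HZcent : forall z, Z z -> up z /\ forall g, up g -> gmul z g = gmul g z)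
  (* Z is normal in G *)
  (HZnorm : forall z g, Z z -> Z (gmul (gmul g z) (ginv g)))
  (* Z acts trivially on the Lie algebra *)
  (HZAd : forall z v, Z z -> gAd z v = v)
  (* q : G -> Gb = G/Z is the quotient map *)
  (Hqmul : forall a b, q (gmul a b) = gmul (q a) (q b))
  (Hqsurj : forall y : Gb, exists g, q g = y)
  (Hqker : forall g, q g = gone Gb <-> Z g)
  (* grading of Gb induced from G, factorized adjoint action *)
  (Hqeps : forall g, geps (q g) = geps g)
  (HqAd : forall g v, gAd (q g) v = gAd g v)
  (x : V) (sigma : G) (HW : GS (x, sigma))
  (alpha : G) (Halpha : Zminus Z sigma alpha) :
  (* (a) *)
  (forall W1 : V * G, GS W1 -> qG q (tcompl alpha W1) = (- W1.1, q W1.2)) /\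
  (* (b) *)
  (gmul alpha alpha <> gone G ->
     ~ (forall W1 : V * G, GS W1 -> tcompl alpha (tcompl alpha W1) = W1)) /\
  (* (c) *)
  ((forall W1 : V * G, GS W1 -> GS (tcompl alpha W1)) /\
   (forall (g : G) (W1 : V * G), up g -> GS W1 ->
      tcompl alpha (act g W1) = act g (tcompl alpha W1))) /\
  (* (d) *)
  (forall W1 : V * G, GS W1 -> tcompl alpha W1 = zact alpha (compl W1)) /\
  (* (e) *)
  ((forall (g : G) (W1 : V * G), GS W1 -> GS (tact alpha g W1)) /\
   (forall W1 : V * G, GS W1 -> tact alpha (gone G) W1 = W1) /\
   (forall (g h : G) (W1 : V * G), GS W1 ->
      tact alpha (gmul g h) W1 = tact alpha g (tact alpha h W1)) /\
   (forall W1 : V * G, GS W1 -> tcompl alpha W1 = tact alpha W1.2 W1) /\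
   (orbit_up (x, sigma) (tcompl alpha (x, sigma)) ->
      forall (g : G) (W1 : V * G), orbit_up (x, sigma) W1 ->
        orbit_up (x, sigma) (tact alpha g W1))) /\
  (* (f) *)
  (((exists a, Zminus Z sigma a /\ orbit_up (x, sigma) (tcompl a (x, sigma)))
      <-> qorbit_up q (qG q (x, sigma)) (- x, q sigma)) /\
   (orbit_up (x, sigma) (tcompl alpha (x, sigma)) ->
      forall beta, Zminus Z sigma beta ->
        ((orbit_up (x, sigma) (tcompl beta (x, sigma))
            <-> Z2 q (x, sigma) (gmul (ginv beta) alpha)) /\
         (orbit_up (x, sigma) (tcompl beta (x, sigma)) ->
            forall (g : G) (W1 : V * G), down g -> GS W1 ->
              tact beta g W1 = zact (gmul beta (ginv alpha)) (tact alpha g W1))))).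
Proof.
case: (HW) => /= Hsd [Hs2 HsA].
have sV : ginv sigma = sigma by apply: esym; apply: ginv_uniq.
have Zup : forall c, Z c -> geps c = true := fun c h => (HZcent c h).1.
have Zc : forall c g, Z c -> up g -> gmul c g = gmul g c :=
  fun c g h => (HZcent c h).2 g.
have ZMinv : forall c, Zminus Z sigma c -> Zminus Z sigma (ginv c).
  move=> c [Zc' Hc]; split; first by apply: HZinv.
  have := congr1 (@ginv R V G) Hc; rewrite ginvK !ginvM sV => E.
  by rewrite -[in RHS]E gmulA.
have conjd : forall h c, down h -> Zminus Z sigma c ->
    gmul (gmul h c) (ginv h) = ginv c.
  move=> h c Hh [Zc' Hc].
  have Hu : up (gmul h sigma) by rewrite /up geps_mul Hh Hsd.
  have -> : h = gmul (gmul h sigma) sigma by rewrite -gmulA Hs2 gmulg1.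
  move: Hu; set u := gmul h sigma => Hu.
  rewrite ginvM sV !gmulA -(gmulA u sigma c) -(gmulA u (gmul sigma c) sigma) Hc.
  by rewrite -(Zc (ginv c) u (HZinv _ Zc') Hu) gmulgK.
have conjd' : forall h c, down h -> Zminus Z sigma c ->
    gmul h c = gmul (ginv c) h.
  by move=> h c Hh Hc; rewrite -(conjd h c) // gmulgKV.
have ZM_s1 : forall s1 c, down s1 -> gmul s1 s1 = gone G -> Zminus Z sigma c ->
    gmul (gmul s1 c) s1 = ginv c.
  move=> s1 c Hd H2 Hc.
  have s1V : ginv s1 = s1 by apply: esym; apply: ginv_uniq.
  by rewrite -{2}s1V conjd.
have GS_z : forall x1 s1 c, GS (x1, s1) -> Zminus Z sigma c ->
    GS (x1, gmul c s1) /\ GS (- x1, gmul c s1).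
  move=> x1 s1 c [/= Hd [H2 HA]] Hc; have [Zc' _] := Hc.
  have D : down (gmul c s1) by rewrite /down geps_mul (Zup c Zc') Hd.
  have S : gmul (gmul c s1) (gmul c s1) = gone G.
    by rewrite -gmulA (gmulA s1) ZM_s1 // gmulgV.
  have A : forall v, gAd (gmul c s1) v = gAd s1 v.
    by move=> v; rewrite gAd_mul HZAd.
  by split; split => //=; split => //; rewrite A ?gAdN HA.
have qZ : forall c, Z c -> q c = gone Gb := fun c h => proj2 (Hqker c) h.
have q1 : q (gone G) = gone Gb by apply: gidem; rewrite -Hqmul gmul1g.
have qV : forall g, q (ginv g) = ginv (q g).
  by move=> g; apply: ginv_uniq; rewrite -Hqmul gmulVg q1.
have sgnq : forall g, sgn (q g) = sgn g by move=> g; rewrite /sgn Hqeps.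
have actz : forall h c W1, up h -> Z c -> act h (zact c W1) = zact c (act h W1).
  move=> h c [x1 s1] Hh Hc; rewrite /act /zact /=; congr pair.
  by rewrite !gmulA (Zc c h).
have tact_mul : forall g h W1, tact alpha (gmul g h) W1 = tact alpha g (tact alpha h W1).
  move=> g h [x1 s1]; rewrite /tact geps_mul.
  have Za : Z (ginv alpha) by apply: HZinv; case: Halpha.
  case Eg: (geps g); case Eh: (geps h) => /=; rewrite actM //.
    by rewrite actz.
  congr (act g _); rewrite /act /zact /=; congr pair.
  rewrite !gmulA -(gmulA (ginv alpha) h (ginv alpha)).
  by rewrite (conjd' h (ginv alpha)) // ?ginvK ?gmulKg //; apply: ZMinv.
have tact_compl : forall W1, GS W1 -> tcompl alpha W1 = tact alpha W1.2 W1.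
  move=> [x1 s1] [/= Hd [H2 HA]]; rewrite /tact (Hd : geps s1 = false).
  rewrite /act /zact /tcompl /=; congr pair.
    by rewrite sgn_down // HA scaleN1r.
  rewrite gmulA gmulgK (conjd' s1 (ginv alpha)) ?ginvK //; exact: ZMinv.
have Za : Z alpha by case: Halpha.
split.
  move=> [x1 s1] _; rewrite /qG /tcompl /= Hqmul qZ // gmul1g //.
split.
  move=> Hne Hall; case: HGne => [[x1 s1] H1].
  have := Hall _ H1; rewrite /tcompl /= opprK => [[E]].
  by apply: Hne; rewrite -(gmulgK s1 (gmul alpha alpha)) -(gmulA alpha alpha s1) E gmulgV.
split.
  split; first by move=> [x1 s1] H; exact: (GS_z x1 s1 alpha H Halpha).2.
  move=> g [x1 s1] Hg _; rewrite /tcompl /act /=; congr pair.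
    by rewrite gAdN scalerN.
  by rewrite !gmulA (Zc alpha g).
split; first by move=> [x1 s1].
have GS_tact : forall g W1, GS W1 -> GS (tact alpha g W1).
  move=> g [x1 s1] H; rewrite /tact; case: ifP => _; first exact: GS_act.
  by apply: GS_act; exact: (GS_z _ _ _ H (ZMinv _ Halpha)).1.
split.
  split; first exact: GS_tact.
  split; first by move=> W1 _; rewrite /tact geps1 act1.
  split; first by move=> g h W1 _; exact: tact_mul.
  split; first exact: tact_compl.
  move=> [w [Hw Ew]] g W1 [u [Hu ->]].
  rewrite /tact; case Eg: (geps g).
    exists (gmul g u); split; last by rewrite actM.
    by move: Hu; rewrite /up geps_mul Eg => ->.
  set v := gmul (gmul g u) sigma.
  have Hv : up v by move: Hu; rewrite /up /v !geps_mul Eg Hsd => ->.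
  exists (gmul v w); split.
    by move: Hv Hw; rewrite /up geps_mul => -> ->.
  rewrite actM -Ew (tact_compl _ HW) /= /tact (Hsd : geps sigma = false).
  rewrite -actz //; last by apply: HZinv.
  by rewrite -(actM g u) -(actM v sigma) /v -(gmulA (gmul g u)) Hs2 gmulg1.
split.
  split.
    move=> [a [Ha [u [Hu E]]]]; rewrite /tcompl /act /= in E; case: E => E1 E2.
    exists u; split => //; rewrite /qG /act /= sgnq HqAd -E1; congr pair.
    by rewrite -qV -!Hqmul -E2 Hqmul (qZ a) ?gmul1g //; case: Ha.
  move=> [g [Hg E]]; rewrite /qG /act /= sgnq HqAd in E; case: E => E1 E2.
  have Zaa : Z (bd sigma g).
    apply/Hqker; rewrite /bd !Hqmul qV -E2 -Hqmul Hs2 //.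
  exists (bd sigma g); split.
    split => //; rewrite /bd !ginvM ginvK sV -!(@gmulA R V G) Hs2 gmulg1 //.
  exists g; split => //; rewrite /tcompl /act /=; congr pair; first exact: E1.
  by rewrite /bd -(@gmulA R V G) Hs2 gmulg1.
move=> [u [Hu E]] beta Hb; rewrite /tcompl /act /= sgn_up // scale1r in E.
case: E => E1 E2.
have Zb : Z beta by case: Hb.
have Zbi : Z (ginv beta) by apply: HZinv.
split.
  split.
    move=> [v [Hv E]]; rewrite /act /= sgn_up // scale1r in E; case: E => E1' E2'.
    have Hvi : up (ginv v) by rewrite /up gepsV.
    have Hg : up (gmul (ginv v) u) by move: Hvi Hu; rewrite /up geps_mul => -> ->.
    have vsv : gmul (gmul (ginv v) sigma) v = gmul (ginv beta) sigma.
      have H : gmul beta (gmul (gmul (ginv v) sigma) v) = sigma.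
        rewrite !gmulA (Zc beta (ginv v) Zb Hvi) -(gmulA (ginv v) beta sigma) E2'.
        by rewrite (gmulA (ginv v) (gmul v sigma)) gmulgKV gmulKg.
      by rewrite -[in RHS]H gmulKg.
    have key : gmul (gmul (gmul (ginv v) u) sigma) (ginv (gmul (ginv v) u)) =
               gmul (gmul (ginv beta) alpha) sigma.
      rewrite ginvM ginvK -!(@gmulA R V G) (gmulA sigma (ginv u) v).
      rewrite (gmulA u (gmul sigma (ginv u)) v) (gmulA u sigma (ginv u)) -E2.
      rewrite -(gmulA alpha sigma v) (gmulA (ginv v) alpha) -(Zc alpha (ginv v) Za Hvi).
      rewrite -(gmulA alpha (ginv v)) (gmulA (ginv v) sigma v) vsv.
      by rewrite gmulA (Zc alpha (ginv beta) Za (Zup _ Zbi)) -(gmulA (ginv beta) alpha sigma).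
    exists (gmul (ginv v) u); split.
      split => //; rewrite /act /qG /= sgnq sgn_up // scale1r HqAd; congr pair.
        by rewrite gAd_mul -E1 E1' -gAd_mul gmulVg gAd1.
      by rewrite -qV -!Hqmul key Hqmul (qZ _ (HZmul _ _ Zbi Za)) gmul1g.
    by rewrite /bd /= key -(@gmulA R V G) Hs2 gmulg1.
  move=> [g [[Hg Hst] Hbd]].
  rewrite /act /qG /= sgnq sgn_up // scale1r HqAd in Hst; case: Hst => Hx _.
  have Zc0 : Z (gmul (ginv beta) alpha) by apply: HZmul.
  move: Hbd Zc0; rewrite /bd /=; set c := gmul (ginv beta) alpha => Hbd Zc0.
  have gsg : gmul (gmul g sigma) (ginv g) = gmul c sigma.
    by rewrite Hbd -(gmulA (gmul (gmul g sigma) (ginv g)) sigma sigma) Hs2 gmulg1.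
  have Hgi : up (ginv g) by rewrite /up gepsV.
  have gisg : gmul (gmul (ginv g) sigma) g = gmul (ginv c) sigma.
    have H : gmul c (gmul (gmul (ginv g) sigma) g) = sigma.
      rewrite !gmulA (Zc c (ginv g) Zc0 Hgi) -(gmulA (ginv g) c sigma) -gsg.
      by rewrite (gmulA (ginv g) (gmul g sigma)) gmulgKV gmulKg.
    by rewrite -[in RHS]H gmulKg.
  have Hxi : gAd (ginv g) x = x by rewrite -{1}Hx -gAd_mul gmulVg gAd1.
  have Hug : up (gmul u (ginv g)) by move: Hu Hgi; rewrite /up geps_mul => -> ->.
  exists (gmul u (ginv g)); split => //.
  rewrite /tcompl /act /= sgn_up // scale1r; congr pair.
    by rewrite gAd_mul Hxi.
  rewrite ginvM ginvK -!(@gmulA R V G) (gmulA sigma g (ginv u)).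
  rewrite (gmulA (ginv g) (gmul sigma g) (ginv u)) (gmulA (ginv g) sigma g) gisg.
  rewrite -(gmulA (ginv c) sigma (ginv u)) (gmulA u (ginv c)).
  rewrite -(Zc (ginv c) u (HZinv _ Zc0) Hu) -(gmulA (ginv c) u) (gmulA u sigma) -E2.
  rewrite /c ginvM ginvK gmulA; congr (gmul _ sigma).
  by rewrite -(gmulA (ginv alpha) beta alpha) (Zc beta alpha Zb (Zup _ Za)) gmulKg.
move=> _ g [x1 s1] Hg [/= Hd [H2 HA]].
have ZMbi := ZMinv _ Hb; have ZMai := ZMinv _ Halpha.
rewrite /tact (Hg : geps g = false) /act /zact /=; congr pair.
rewrite !gmulA (conjd' g (ginv beta)) // ginvK.
rewrite -(gmulA (gmul beta (ginv alpha)) g (ginv alpha)) (conjd' g (ginv alpha)) // ginvK.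
by rewrite -(gmulA beta (ginv alpha)) gmulKg.
Qed.
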